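(* Let $\Delta>0$, $h>0$, $N\in\mathbb{N}$, $\gamma>0$, $\sigma^2>0$ and real numbers $\eta_1,\dots,\eta_N$ be given. Let $u:\mathbb{R}\to\mathbb{R}$ be a known deterministic causal input ($u(t)=0$ for $t<0$). Let $g$ be a zero-mean Gaussian process on $[0,\infty)$ with covariance $\mathbb{E}\{g(t)g(s)\}=k(t,s)/\gamma$, and let $v(\Delta),\dots,v(N\Delta)$ be i.i.d. $\mathcal{N}(0,\sigma^2)$ random variables independent of $g$. Set $z(i\Delta)=(g*u)(i\Delta)+v(i\Delta)$, where $(g*u)(t)=\int_0^\infty g(\tau)u(t-\tau)\,\mathrm{d}\tau$, and suppose the observed data is the event $\mathcal{Y}_{1:N}=\{z(i\Delta)\in[\eta_i,\eta_i+h),\ i=1,\dots,N\}$. Let $\{t_i\}_{i=1}^{N+M}$ be finitely many real numbers with $t_i=i\Delta$ for $i=1,\dots,N$ and $t_{N+1},\dots,t_{N+M}$ arbitrary, and define $\mathbf{x}=[(g*u)(t_1),\dots,(g*u)(t_{N+M})]^\top$; assume the (Gaussian) covariance matrix of $\mathbf{x}$ is nonsingular. Let $\breve{g}$ be a minimizer over $g\in\mathcal{G}$ of $$-2\sum_{i=1}^{N}\log\left[\int_{\eta_i}^{\eta_i+h}\exp\Big(-\tfrac{1}{2\sigma^2}\big[z_i-(g*u)(i\Delta)\big]^2\Big)\mathrm{d}z_i\right]+\gamma\|g\|_{\mathcal{G}}^2 .$$ Then the maximum a posteriori (MAP) estimate of $\mathbf{x}$ given $\mathcal{Y}_{1:N}$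 is $\hat{\mathbf{x}}=[(\breve g*u)(t_1),\dots,(\breve g*u)(t_{N+M})]^\top$.
   Context: $k:\mathbb{R}_+\times\mathbb{R}_+\to\mathbb{R}$ is a positive-definite kernel and $\mathcal{G}$ is the reproducing kernel Hilbert space (RKHS) it induces, with norm $\|\cdot\|_{\mathcal{G}}$. It is assumed that $u$ and $\mathcal{G}$ are such that each evaluation $g\mapsto (g*u)(t)$ (for the relevant $t$) is a bounded linear functional on $\mathcal{G}$. The kernel matrix $\mathbf{K}\in\mathbb{R}^{N\times N}$ has entries $\mathbf{K}_{ij}=\int_0^\infty\int_0^\infty u(i\Delta-\xi)u(j\Delta-\tau)k(\xi,\tau)\,\mathrm{d}\tau\,\mathrm{d}\xi$ and is assumed nonsingular. *)

(* Defs.v *)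
From HB Require Import structures.
From mathcomp Require Import all_boot all_order all_algebra.
From mathcomp Require Import all_classical all_reals all_analysis.
Set Implicit Arguments. Unset Strict Implicit. Unset Printing Implicit Defensive.
Import Order.TTheory GRing.Theory Num.Theory.
Import numFieldNormedType.Exports.
Local Open Scope classical_set_scope.
Local Open Scope ring_scope.

Section Defs.
Variable R : realType.
Local Notation leb := (@lebesgue_measure R).

Definition pd_kernel (k : R -> R -> R) : Prop :=
  (forall s t, 0 <= s -> 0 <= t -> k s t = k t s) /\
  (forall (n : nat) (a s : 'I_n -> R), (forall i, 0 <= s i) ->
     0 <= \sum_(i < n) \sum_(j < n) a i * a j * k (s i) (s j)).

(* the section k(., t), functions on R_+ being extended by 0 to R *)
Definition ksec (k : R -> R -> R) (t : R) : R -> R :=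
  fun s => if 0 <= s then k s t else 0.

(* These axioms characterize the RKHS of k uniquely. *)
Definition is_RKHS (k : R -> R -> R) (G : set (R -> R))
    (ip : (R -> R) -> (R -> R) -> R) : Prop :=
      G (fun _ => 0) /\
      (forall f g, G f -> G g -> G (f \+ g)) /\
      (forall (a : R) f, G f -> G (fun s => a * f s)) /\
      (forall f, G f -> forall s, s < 0 -> f s = 0) /\
      (forall f g, G f -> G g -> ip f g = ip g f) /\
      (forall f g h, G f -> G g -> G h -> ip (f \+ g) h = ip f h + ip g h) /\
      (forall (a : R) f g, G f -> G g -> ip (fun s => a * f s) g = a * ip f g) /\
      (forall f, G f -> 0 <= ip f f) /\
      (forall f, G f -> ip f f = 0 -> f = (fun _ => 0)) /\
      (forall fn : nat -> (R -> R), (forall n, G (fn n)) ->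
         (forall e : R, 0 < e -> exists N : nat, forall m n, (N <= m)%N -> (N <= n)%N ->
            Num.sqrt (ip (fn m \- fn n) (fn m \- fn n)) < e) ->
         exists f, G f /\
           (fun n => Num.sqrt (ip (fn n \- f) (fn n \- f))) @ \oo --> (0 : R)) /\
      (forall t, 0 <= t -> G (ksec k t) /\ forall f, G f -> ip f (ksec k t) = f t).

Definition convol (g u : R -> R) (t : R) : R :=
  (\int[leb]_(tau in `[0, +oo[) (g tau * u (t - tau)))%R.

Definition kentry (k : R -> R -> R) (u : R -> R) (a b : R) : R :=
  (\int[leb]_(xi in `[0, +oo[)
     (\int[leb]_(tau in `[0, +oo[) (u (a - xi) * u (b - tau) * k xi tau)))%R.

Definition gauss_int (s2 m eta h : R) : R :=
  (\int[leb]_(z in `[eta, eta + h[) (expR (- ((z - m) ^+ 2) / (2 * s2))))%R.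

Definition crit (N : nat) (Delta h gamma s2 : R) (eta : 'I_N -> R) (u : R -> R)
    (ip : (R -> R) -> (R -> R) -> R) (g : R -> R) : R :=
  - 2 * (\sum_(i < N) ln (gauss_int s2 (convol g u (i.+1%:R * Delta)) (eta i) h))
  + gamma * ip g g.

(* covariance matrix of x = [(g*u)(t_1); ...; (g*u)(t_n)] when g is a zero-mean
   Gaussian process with covariance k/gamma *)
Definition covx (n : nat) (gamma : R) (k : R -> R -> R) (u : R -> R) (t : 'I_n -> R)
    : 'M[R]_n :=
  gamma^-1 *: \matrix_(i, j) kentry k u (t i) (t j).

Definition gauss_density (n : nat) (S : 'M[R]_n) (x : 'cV[R]_n) : R :=
  (Num.sqrt (2 * pi)) ^- n / Num.sqrt (\det S)
  * expR (- (x^T *m invmx S *m x) 0 0 / 2).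

(* likelihood P(Y_{1:N} | x): z_i = x_i + v_i, v_i iid N(0, s2), z_i in [eta_i, eta_i + h) *)
Definition likelihood (N M : nat) (s2 h : R) (eta : 'I_N -> R) (x : 'cV[R]_(N + M)) : R :=
  \prod_(i < N) ((Num.sqrt (2 * pi * s2))^-1 * gauss_int s2 (x (lshift M i) 0) (eta i) h).

(* posterior density of x given Y_{1:N}, up to the positive constant 1 / P(Y_{1:N})
   (Bayes' rule: p(x | Y) = P(Y | x) p(x) / P(Y)) *)
Definition posterior (N M : nat) (gamma s2 h : R) (eta : 'I_N -> R) (k : R -> R -> R)
    (u : R -> R) (t : 'I_(N + M) -> R) (x : 'cV[R]_(N + M)) : R :=
  @likelihood N M s2 h eta x * gauss_density (covx gamma k u t) x.

Definition is_MAP (n : nat) (post : 'cV[R]_n -> R) (xhat : 'cV[R]_n) : Prop :=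
  forall x, post x <= post xhat.

End Defs.

(* Main.v *)
Require Import Defs.
From HB Require Import structures.
From mathcomp Require Import all_boot all_order all_algebra.
From mathcomp Require Import all_classical all_reals all_analysis.
From mathcomp Require Import ring lra.
Import Order.TTheory GRing.Theory Num.Theory.
Import numFieldNormedType.Exports.
Local Open Scope classical_set_scope.
Local Open Scope ring_scope.
Set Implicit Arguments. Unset Strict Implicit. Unset Printing Implicit Defensive.
Definition IPS (R : realType) (G : set (R -> R)) (ip : (R -> R) -> (R -> R) -> R) :=
  [/\ G (fun _ => 0),
      (forall f g, G f -> G g -> G (f \+ g)),
      (forall (a : R) f, G f -> G (fun s => a * f s)),
      (forall f g, G f -> G g -> ip f g = ip g f) &
  [/\ (forall f g h, G f -> G g -> G h -> ip (f \+ g) h = ip f h + ip g h),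
      (forall (a : R) f g, G f -> G g -> ip (fun s => a * f s) g = a * ip f g),
      (forall f, G f -> 0 <= ip f f) &
      (forall f, G f -> ip f f = 0 -> f = (fun _ => 0))]].

Lemma RKHS_IPS (R : realType) k G ip : @is_RKHS R k G ip -> IPS G ip.
Proof.
by move=> [? [? [? [_ [? [? [? [? [? _]]]]]]]]]; split.
Qed.

Section IP.
Variables (R : realType) (G : set (R -> R)) (ip : (R -> R) -> (R -> R) -> R).
Variable (HI : IPS G ip).

Lemma G0 : G (fun _ => 0). Proof. by case: HI. Qed.
Lemma GD f g : G f -> G g -> G (f \+ g). Proof. by case: HI => _ H _ _ _; apply: H. Qed.
Lemma GZ a f : G f -> G (fun s => a * f s). Proof. by case: HI => _ _ H _ _; apply: H. Qed.
Lemma ipC f g : G f -> G g -> ip f g = ip g f. Proof. by case: HI => _ _ _ H _; apply: H. Qed.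
Lemma ipDl f g h : G f -> G g -> G h -> ip (f \+ g) h = ip f h + ip g h.
Proof. by case: HI => _ _ _ _ [H _ _ _]; apply: H. Qed.
Lemma ipZl a f g : G f -> G g -> ip (fun s => a * f s) g = a * ip f g.
Proof. by case: HI => _ _ _ _ [_ H _ _]; apply: H. Qed.
Lemma ipge0 f : G f -> 0 <= ip f f. Proof. by case: HI => _ _ _ _ [_ _ H _]; apply: H. Qed.
Lemma ip_eq0 f : G f -> ip f f = 0 -> f = (fun _ => 0).
Proof. by case: HI => _ _ _ _ [_ _ _ H]; apply: H. Qed.

Lemma GL a b f g : G f -> G g -> G (fun s => a * f s + b * g s).
Proof. move=> Gf Gg; exact: (GD (GZ a Gf) (GZ b Gg)). Qed.

Lemma ipLl a b f g h : G f -> G g -> G h ->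
  ip (fun s => a * f s + b * g s) h = a * ip f h + b * ip g h.
Proof.
move=> Gf Gg Gh.
have -> : (fun s => a * f s + b * g s) = (fun s => a * f s) \+ (fun s => b * g s) by [].
by rewrite ipDl ?ipZl //; apply: GZ.
Qed.

Lemma ipLr a b f g h : G f -> G g -> G h ->
  ip h (fun s => a * f s + b * g s) = a * ip h f + b * ip h g.
Proof.
move=> Gf Gg Gh; rewrite ipC ?ipLl ?(ipC Gh) //; exact: GL.
Qed.

Lemma ip0l h : G h -> ip (fun _ => 0) h = 0.
Proof.
move=> Gh; have -> : (fun _ : R => 0 : R) = (fun s => 0 * h s).
  by apply: funext => s; rewrite mul0r.
by rewrite ipZl // mul0r.
Qed.

Lemma ip0r h : G h -> ip h (fun _ => 0) = 0.
Proof. by move=> Gh; rewrite ipC ?ip0l //; exact: G0. Qed.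

Lemma ipQ a b f g : G f -> G g ->
  ip (fun s => a * f s + b * g s) (fun s => a * f s + b * g s) =
  a ^+ 2 * ip f f + 2 * a * b * ip f g + b ^+ 2 * ip g g.
Proof.
move=> Gf Gg; rewrite ipLl ?ipLr //; last exact: GL.
rewrite (ipC Gg Gf); ring.
Qed.

Lemma CS f g : G f -> G g -> ip f g ^+ 2 <= ip f f * ip g g.
Proof.
move=> Gf Gg.
have [g0|gn0] := eqVneq (ip g g) 0.
  rewrite (ip_eq0 Gg g0) !ip0r ?mulr0 ?expr0n //; exact: G0.
have gp : 0 < ip g g by rewrite lt0r gn0 ipge0.
have := ipge0 (GL 1 (- (ip f g / ip g g)) Gf Gg).
rewrite ipQ // => H.
have e : ip f f - ip f g ^+ 2 / ip g g >= 0.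
  move: H; rewrite expr1n mul1r sqrrN.
  set c := ip f g / ip g g.
  have -> : ip f g ^+ 2 / ip g g = c * ip f g by rewrite /c; field; rewrite gn0.
  have hc : c ^+ 2 * ip g g = c * ip f g by rewrite /c; field; rewrite gn0.
  move=> H; nra.
rewrite -subr_ge0; have -> : ip f f * ip g g - ip f g ^+ 2 =
  (ip f f - ip f g ^+ 2 / ip g g) * ip g g by field; rewrite gn0.
by apply: mulr_ge0 => //; exact: ltW.
Qed.

End IP.
Lemma inv_small (R : realType) (e : R) : 0 < e ->
  exists N, forall n, (N <= n)%N -> (n.+1%:R : R)^-1 < e.
Proof.
move=> e0; have hi : 0 <= e^-1 by rewrite invr_ge0 ltW.
exists (Num.Def.archi_bound e^-1) => n hn.
have h1 := archi_boundP hi.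
have h2 : ((Num.Def.archi_bound e^-1)%:R : R) < n.+1%:R by rewrite ltr_nat ltnS.
have h3 : e^-1 < n.+1%:R by exact: lt_trans h2.
rewrite -div1r ltr_pdivrMr ?ltr0Sn //.
move: h3; rewrite -div1r ltr_pdivrMr //.
by rewrite mulrC.
Qed.

Lemma le_small (R : realType) (x y K : R) : 0 <= K ->
  (forall e, 0 < e -> e < 1 -> x <= y + K * e) -> x <= y.
Proof.
move=> K0 H; rewrite leNgt; apply/negP => hyx.
set a := x - y.
have a0 : 0 < a by rewrite /a subr_gt0.
have d0 : 0 < K + a + 1 by lra.
have := H (a / (K + a + 1)).
rewrite divr_gt0 // ltr_pdivrMr // => /(_ isT).
have -> : 1 * (K + a + 1) = K + a + 1 by rewrite mul1r.
have -> : a < K + a + 1 by lra.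
move=> /(_ isT).
have : K * (a / (K + a + 1)) < a.
  rewrite mulrA ltr_pdivrMr //; nra.
rewrite /a; lra.
Qed.

Lemma sq_le_abs (R : realType) (p q : R) : 0 <= q -> p ^+ 2 <= q ^+ 2 -> `|p| <= q.
Proof.
move=> q0 h; have [hp|hp] := lerP 0 p.
  rewrite ger0_norm //; nra.
rewrite ltr0_norm //; nra.
Qed.

Lemma small0 (R : realType) (a C : R) (x : nat -> R) :
  (forall e, 0 < e -> exists n, 0 <= x n /\ x n < e) ->
  (forall n, a <= C * x n) -> a <= 0.
Proof.
move=> Hx Ha; rewrite leNgt; apply/negP => a0.
have c0 : 0 < `|C| + 1 by rewrite ltr_pwDr ?normr_ge0.
have [n [xn0 xn]] := Hx (a / (`|C| + 1)) (divr_gt0 a0 c0).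
have h1 : C * x n <= `|C| * x n by rewrite ler_wpM2r // ler_norm.
have h2 : `|C| * x n <= `|C| * (a / (`|C| + 1)) by rewrite ler_wpM2l // ltW.
have h3 : `|C| * (a / (`|C| + 1)) < a.
  rewrite mulrA ltr_pdivrMr //; have := normr_ge0 C; nra.
have := Ha n; lra.
Qed.
Section Riesz.
Variables (R : realType) (G : set (R -> R)) (ip : (R -> R) -> (R -> R) -> R).
Variable (HI : IPS G ip).
Variable (Hc : forall fn : nat -> (R -> R), (forall n, G (fn n)) ->
         (forall e : R, 0 < e -> exists N : nat, forall m n, (N <= m)%N -> (N <= n)%N ->
            Num.sqrt (ip (fn m \- fn n) (fn m \- fn n)) < e) ->
         exists f, G f /\
           (fun n => Num.sqrt (ip (fn n \- f) (fn n \- f))) @ \oo --> (0 : R)).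

Lemma subE (f g : R -> R) : f \- g = (fun s => 1 * f s + (-1) * g s).
Proof. by apply: funext => s /=; rewrite mul1r mulN1r. Qed.

Lemma riesz (L : (R -> R) -> R) :
  (forall f g, G f -> G g -> L (f \+ g) = L f + L g) ->
  (forall a f, G f -> L (fun s => a * f s) = a * L f) ->
  (exists C, forall g, G g -> `|L g| <= C * Num.sqrt (ip g g)) ->
  exists r, G r /\ forall g, G g -> ip g r = L g.
Proof.
move=> LD LZ [C LB].
have LL a b f g : G f -> G g -> L (fun s => a * f s + b * g s) = a * L f + b * L g.
  move=> Gf Gg.
  have -> : (fun s => a * f s + b * g s) = (fun s => a * f s) \+ (fun s => b * g s) by [].
  by rewrite LD ?LZ //; apply: (GZ HI).
have L0 : L (fun _ => 0) = 0.
  have -> : (fun _ : R => 0 : R) = (fun s => 0 * (fun _ : R => 0 : R) s).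
    by apply: funext => s; rewrite mul0r.
  by rewrite LZ ?mul0r //; apply: (G0 HI).
case: (pselect (exists e, G e /\ L e != 0)) => [[w [Gw Lw]]|Hno]; last first.
  exists (fun _ => 0); split; first exact: (G0 HI).
  move=> g Gg; rewrite (ip0r HI) //.
  case: (eqVneq (L g) 0) => // hL; exfalso; apply: Hno; by exists g.
pose S := [set x | exists f, [/\ G f, L f = 1 & x = ip f f]].
have S0 : S (ip (fun s => (L w)^-1 * w s) (fun s => (L w)^-1 * w s)).
  exists (fun s => (L w)^-1 * w s); split => //; first exact: (GZ HI).
  by rewrite LZ // mulVf.
have Slb : has_lbound S.
  by exists 0 => x [f [Gf _ ->]]; exact: (ipge0 HI).
have Sinf : has_inf S by split => //; eexists; exact: S0.
pose d := inf S.
have Hd f : G f -> L f = 1 -> d <= ip f f.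
  by move=> Gf Lf; apply: ge_inf => //; exists f.
have d0 : 0 <= d.
  have [x Sx] : S !=set0 by eexists; exact: S0.
  by apply: lb_le_inf; [by exists x | move=> y [f [Gf _ ->]]; exact: (ipge0 HI)].
have Hseq n : exists f, [/\ G f, L f = 1 & ip f f < d + (n.+1%:R)^-1].
  have hh : 0 < (n.+1%:R : R)^-1 by rewrite invr_gt0 ltr0Sn.
  have [x [f [Gf Lf ->]] hx] := inf_adherent hh Sinf.
  by exists f.
have [fs Hfs] := choice Hseq.
have Gfs n : G (fs n) by case: (Hfs n).
have Lfs n : L (fs n) = 1 by case: (Hfs n).
have Ffs n : ip (fs n) (fs n) < d + (n.+1%:R)^-1 by case: (Hfs n).
have Hcauchy m n : ip (fs m \- fs n) (fs m \- fs n) <=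
    2 * (m.+1%:R)^-1 + 2 * (n.+1%:R)^-1.
  rewrite subE (ipQ HI) //.
  have := Hd (fun s => 2^-1 * fs m s + 2^-1 * fs n s) (GL HI _ _ (Gfs m) (Gfs n)).
  rewrite LL // !Lfs (ipQ HI) // => /(_ ltac:(field)).
  have := Ffs m; have := Ffs n.
  rewrite !expr2 => h1 h2 h3.
  have {}h3 := h3 isT.
  set A := ip (fs m) (fs m) in h2 h3 *. set B := ip (fs n) (fs n) in h1 h3 *. set P := ip (fs m) (fs n) in h3 *. set u := (m.+1%:R : R)^-1 in h2 *. set v := (n.+1%:R : R)^-1 in h1 *.
  have t1 : B - d < v by lra.
  have t2 : A - d < u by lra.
  have t3 : 4 * d <= A + 2 * P + B by lra.
  lra.
have [f [Gf Hconv]] : exists f, G f /\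
    (fun n => Num.sqrt (ip (fs n \- f) (fs n \- f))) @ \oo --> (0 : R).
  apply: Hc => // e e0.
  have e20 : 0 < e ^+ 2 / 4 by rewrite divr_gt0 ?exprn_gt0.
  have [N HN] := inv_small e20.
  exists N => m n hm hn.
  rewrite -(ger0_norm (ltW e0)) -sqrtr_sqr ltr_sqrt ?exprn_gt0 //.
  apply: (le_lt_trans (Hcauchy m n)).
  have := HN m hm; have := HN n hn.
  set E := e ^+ 2; set u := (m.+1%:R : R)^-1; set v := (n.+1%:R : R)^-1; lra.
have Hconv' : forall e, 0 < e -> exists N, forall n, (N <= n)%N ->
    Num.sqrt (ip (fs n \- f) (fs n \- f)) < e.
  move: Hconv; move/cvgr0Pnorm_lt => H e he; have [N _ HN] := H e he.
  exists N => n hn; have := HN n hn.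
  by rewrite ger0_norm ?sqrtr_ge0.
have Gsub n : G (fs n \- f) by rewrite subE; apply: (GL HI).
have Hsmall e : 0 < e -> exists n, (n.+1%:R : R)^-1 < e /\
    ip (fs n \- f) (fs n \- f) < e ^+ 2.
  move=> e0; have [N1 H1] := Hconv' e e0; have [N2 H2] := inv_small e0.
  exists (maxn N1 N2); split; first by apply: H2; rewrite leq_maxr.
  have h := H1 (maxn N1 N2) (leq_maxl _ _).
  have D0 : 0 <= ip (fs (maxn N1 N2) \- f) (fs (maxn N1 N2) \- f) by apply: (ipge0 HI).
  rewrite -(sqr_sqrtr D0).
  have s0 := sqrtr_ge0 (ip (fs (maxn N1 N2) \- f) (fs (maxn N1 N2) \- f)).
  set q := Num.sqrt _ in h s0 *; rewrite !expr2; nra.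
have Lf : L f = 1.
  have H : `|1 - L f| <= 0.
    apply: (@small0 _ _ C (fun n => Num.sqrt (ip (fs n \- f) (fs n \- f)))).
      move=> e e0; have [N HN] := Hconv' e e0; exists N; split; last exact: HN.
      exact: sqrtr_ge0.
    move=> n; rewrite -(Lfs n).
    have -> : L (fs n) - L f = L (fs n \- f) by rewrite subE LL // mul1r mulN1r.
    exact: LB.
  by apply/eqP; rewrite eq_sym -subr_eq0; rewrite -normr_le0.
have ffd : ip f f <= d.
  apply: (@le_small _ _ _ (2 * d + 4)); first lra.
  move=> e e0 e1.
  have [n [hn hd]] := Hsmall e e0.
  have -> : f = (fun s => 1 * fs n s + (-1) * (fs n \- f) s).
    by apply: funext => s /=; rewrite mul1r mulN1r opprB addrC subrK.
  rewrite (ipQ HI) //.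
  have hF := Ffs n.
  have hcs := CS HI (Gfs n) (Gsub n).
  set p := ip (fs n) (fs n \- f) in hcs *.
  set D := ip (fs n \- f) (fs n \- f) in hcs hd *.
  set F := ip (fs n) (fs n) in hcs hF *.
  have D0 : 0 <= D by exact: (ipge0 HI).
  have F0 : 0 <= F by exact: (ipge0 HI).
  have hp : `|p| <= (d + 1) * e.
    apply: sq_le_abs; first by apply: mulr_ge0; lra.
    apply: (le_trans hcs).
    have hF1 : F <= d + 1.
      apply: ltW; apply: (lt_le_trans hF); rewrite lerD2l.
      have := hn; set u := (n.+1%:R : R)^-1; lra.
    rewrite exprMn.
    have : F * D <= (d + 1) * e ^+ 2 by apply: ler_pM => //; lra.
    move=> h; apply: (le_trans h); rewrite !expr2; nra.
  have hp' : - p <= (d + 1) * e.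
    by apply: le_trans hp; rewrite -normrN ler_norm.
  have hF' : F < d + e.
    apply: (lt_le_trans hF); rewrite lerD2l; have := hn; set u := (n.+1%:R : R)^-1; lra.
  have ee : e * e <= e by nra.
  rewrite !expr2 in hd *; lra.
have orth h : G h -> L h = 0 -> ip f h = 0.
  move=> Gh Lh.
  set a := ip f h; set H := ip h h.
  have H0 : 0 <= H by exact: (ipge0 HI).
  pose lam := - a / (H + 1).
  have := Hd (fun s => 1 * f s + lam * h s) (GL HI _ _ Gf Gh).
  rewrite LL // Lf Lh mulr0 addr0 mulr1 => /(_ erefl).
  rewrite (ipQ HI) // -/a -/H => hq.
  have hq' : 0 <= 2 * lam * a + lam ^+ 2 * H.
    move: hq ffd; rewrite expr1n mul1r mulr1; set z := lam ^+ 2 * H; lra.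
  have : 2 * lam * a + lam ^+ 2 * H = - (a ^+ 2 * (H + 2)) / (H + 1) ^+ 2.
    by rewrite /lam; field; lra.
  move=> eq; rewrite eq in hq'.
  have hH1 : 0 < (H + 1) ^+ 2 by rewrite exprn_gt0 //; lra.
  move: hq'; rewrite mulNr oppr_ge0 pmulr_lle0 ?invr_gt0 // => h2.
  have : a ^+ 2 <= 0 by rewrite -(pmulr_lle0 _ (_ : 0 < H + 2)) //; lra.
  by rewrite expr2 => h3; nra.
have ff0 : 0 < ip f f.
  rewrite lt0r (ipge0 HI) // andbT; apply/eqP => h0.
  by move: Lf; rewrite (ip_eq0 HI Gf h0) L0 => /esym/eqP; rewrite oner_eq0.
exists (fun s => (ip f f)^-1 * f s); split; first exact: (GZ HI).
move=> g Gg.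
have := orth (fun s => 1 * g s + (- L g) * f s) (GL HI _ _ Gg Gf).
rewrite LL // Lf mulr1 mul1r subrr => /(_ erefl).
rewrite (ipC HI Gf); last exact: (GL HI).
rewrite (ipLl HI) // mul1r => h.
rewrite (ipC HI Gg (GZ HI _ Gf)).
rewrite (ipZl HI) // (ipC HI Gf Gg).
have -> : ip g f = L g * ip f f.
  by move/eqP: h; rewrite mulNr subr_eq0 => /eqP.
by rewrite mulrC -mulrA mulfV ?mulr1 // gt_eqF.
Qed.
End Riesz.
Section Gram.
Variables (R : realType) (G : set (R -> R)) (ip : (R -> R) -> (R -> R) -> R).
Variable (HI : IPS G ip).
Variables (n : nat) (r : 'I_n -> R -> R) (Gr : forall i, G (r i)).

Lemma fcomb_seq (c : 'I_n -> R) (S : seq 'I_n) :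
  G (fun s => \sum_(j <- S) c j * r j s) /\
  forall h, G h -> ip (fun s => \sum_(j <- S) c j * r j s) h = \sum_(j <- S) c j * ip (r j) h.
Proof.
elim: S => [|a S [IH1 IH2]].
  have -> : (fun s => \sum_(j <- [::]) c j * r j s) = (fun _ => 0).
    by apply: funext => s; rewrite big_nil.
  split; first exact: (G0 HI).
  by move=> h Gh; rewrite (ip0l HI) // big_nil.
have -> : (fun s => \sum_(j <- a :: S) c j * r j s) =
    (fun s => c a * r a s + 1 * (fun s => \sum_(j <- S) c j * r j s) s).
  by apply: funext => s; rewrite big_cons mul1r.
split; first exact: (GL HI).
by move=> h Gh; rewrite (ipLl HI) // IH2 // big_cons mul1r.
Qed.

Definition fcomb (c : 'I_n -> R) := fun s => \sum_(j < n) c j * r j s.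

Lemma G_fcomb c : G (fcomb c). Proof. exact: (fcomb_seq c _).1. Qed.
Lemma ip_fcomb c h : G h -> ip (fcomb c) h = \sum_(j < n) c j * ip (r j) h.
Proof. exact: (fcomb_seq c _).2. Qed.

Variable (L : 'I_n -> (R -> R) -> R).
Variable (Lr : forall i g, G g -> ip g (r i) = L i g).
Let K := \matrix_(i, j) ip (r i) (r j).
Variable (KU : K \in unitmx).

Lemma gram_a (x : 'cV[R]_n) : exists g, [/\ G g, (forall i, L i g = x i 0),
   ip g g = (x^T *m invmx K *m x) 0 0 &
   forall h, G h -> ip g h = \sum_(j < n) (invmx K *m x) j 0 * L j h].
Proof.
set c := invmx K *m x.
exists (fcomb (fun j => c j 0)).
have Hip h : G h -> ip (fcomb (fun j => c j 0)) h = \sum_(j < n) c j 0 * L j h.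
  move=> Gh; rewrite ip_fcomb //; apply: eq_bigr => j _.
  by rewrite (ipC HI (Gr j) Gh) Lr.
have HL i : L i (fcomb (fun j => c j 0)) = x i 0.
  rewrite -Lr; last exact: G_fcomb.
  rewrite ip_fcomb //.
  have -> : x = K *m c by rewrite /c mulKVmx.
  rewrite !mxE; apply: eq_bigr => j _.
  by rewrite ?mxE (ipC HI (Gr j) (Gr i)) mulrC.
split => //; first exact: G_fcomb.
rewrite Hip; last exact: G_fcomb.
rewrite -mulmxA mxE; apply: eq_bigr => j _.
by rewrite HL !mxE mulrC.
Qed.

Lemma gram_b g : G g ->
  ((\col_i L i g)^T *m invmx K *m (\col_i L i g)) 0 0 <= ip g g.
Proof.
move=> Gg; set x := \col_i L i g.
have [p [Gp Lp pp Hp]] := gram_a x.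
have gp : ip p g = ip p p.
  rewrite !Hp //; apply: eq_bigr => j _.
  by rewrite Lp; congr (_ * _); rewrite /x mxE.
rewrite -pp.
have := ipge0 HI (GL HI 1 (-1) Gg Gp).
rewrite (ipQ HI) // (ipC HI Gg Gp) gp.
rewrite expr1n sqrrN expr1n !mul1r mulr1 => h.
set a := ip g g in h *; set b := ip p p in h *; lra.
Qed.

End Gram.
Lemma cont_gauss (R : realType) (m c : R) : continuous (fun z : R => expR (- ((z - m) * (z - m)) / c)).
Proof.
move=> x.
apply: (@continuous_comp _ _ _ (fun z : R => - ((z - m) * (z - m)) / c) expR); last exact: continuous_expR.
apply: cvgMl; apply: cvgN; apply: cvgM; apply: cvgB; (exact: cvg_id || exact: cvg_cst).
Qed.

Lemma gauss_int_gt0 (R : realType) (s2 m eta h : R) : 0 < s2 -> 0 < h -> 0 < gauss_int s2 m eta h.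
Proof.
move=> s0 h0.
pose f := fun z : R => expR (- ((z - m) ^+ 2) / (2 * s2)).
have fc : continuous f.
  have -> : f = (fun z : R => expR (- ((z - m) * (z - m)) / (2 * s2))).
    by apply: funext => z; rewrite /f expr2.
  exact: cont_gauss.
pose B := (`|eta - m| + h) ^+ 2.
pose c := expR (- B / (2 * s2)).
have c0 : 0 < c by exact: expR_gt0.
have sub : (`[eta, eta + h[%classic : set R) `<=` `[eta, eta + h]%classic.
  by apply: subset_itvl; rewrite bnd_simp.
have intf : (@lebesgue_measure R).-integrable `[eta, eta + h[ (EFin \o f).
  have H1 : (@lebesgue_measure R).-integrable `[eta, eta + h] (EFin \o f).
    apply: continuous_compact_integrable; first exact: segment_compact.
    by apply: continuous_subspaceT.
  apply: (integrableS _ _ _ H1); [exact: measurable_itv | exact: measurable_itv | exact: sub].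
have intc : (@lebesgue_measure R).-integrable `[eta, eta + h[ (EFin \o (fun _ : R => c)).
  have H1 : (@lebesgue_measure R).-integrable `[eta, eta + h] (EFin \o (fun _ : R => c)).
    apply: continuous_compact_integrable; first exact: segment_compact.
    by apply: continuous_subspaceT => x; exact: cvg_cst.
  apply: (integrableS _ _ _ H1); [exact: measurable_itv | exact: measurable_itv | exact: sub].
have hle : \int[@lebesgue_measure R]_(z in `[eta, eta + h[) (fun _ : R => c) z <=
    \int[@lebesgue_measure R]_(z in `[eta, eta + h[) f z.
  apply: (le_Rintegral _ intc intf); first exact: measurable_itv.
  move=> z; rewrite /= in_itv /= => /andP[z1 z2].
  rewrite /f /c ler_expR; rewrite !mulNr lerN2; apply: ler_wpM2r.
    by rewrite invr_ge0; apply: mulr_ge0 => //; exact: ltW.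
  rewrite /B; have := ler_norm (eta - m); have := ler_norm (- (eta - m)); rewrite normrN.
  move=> n1 n2; rewrite !expr2; nra.
rewrite Rintegral_cst ?lebesgue_measure_itv /= in hle; last exact: measurable_itv.
move: hle; rewrite lebesgue_measure_itv /= lte_fin ltrDl h0 /= addrAC subrr add0r => hle.
apply: (lt_le_trans _ hle); exact: mulr_gt0.
Qed.

Lemma convolD (R : realType) (u : R -> R) (t : R) f g :
  (@lebesgue_measure R).-integrable `[0, +oo[ (fun tau => (f tau * u (t - tau))%:E) ->
  (@lebesgue_measure R).-integrable `[0, +oo[ (fun tau => (g tau * u (t - tau))%:E) ->
  convol (f \+ g) u t = convol f u t + convol g u t.
Proof.
move=> hf hg; rewrite /convol.
under eq_Rintegral do rewrite /= mulrDl.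
by rewrite RintegralD //; exact: measurable_itv.
Qed.

Lemma convolZ (R : realType) (u : R -> R) (t : R) (a : R) f :
  (@lebesgue_measure R).-integrable `[0, +oo[ (fun tau => (f tau * u (t - tau))%:E) ->
  convol (fun s => a * f s) u t = a * convol f u t.
Proof.
move=> hf; rewrite /convol.
under eq_Rintegral do rewrite -mulrA.
by rewrite RintegralZl //; exact: measurable_itv.
Qed.
Theorem lemma1 (R : realType) (Delta h gamma s2 : R) (N M : nat)
  (eta : 'I_N -> R) (u : R -> R) (k : R -> R -> R)
  (G : set (R -> R)) (ip : (R -> R) -> (R -> R) -> R)
  (t : 'I_(N + M) -> R) (gb : R -> R) :
  0 < Delta -> 0 < h -> 0 < gamma -> 0 < s2 ->
  (forall s, s < 0 -> u s = 0) ->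
  pd_kernel k ->
  is_RKHS k G ip ->
  (forall i : 'I_N, t (lshift M i) = i.+1%:R * Delta) ->
  (forall i : 'I_(N + M), exists C : R, forall g, G g ->
     (@lebesgue_measure R).-integrable `[0, +oo[ (fun tau => (g tau * u (t i - tau))%:E)
     /\ `|convol g u (t i)| <= C * Num.sqrt (ip g g)) ->
  covx gamma k u t \in unitmx ->
  G gb ->
  (forall g, G g -> @crit R N Delta h gamma s2 eta u ip gb <= @crit R N Delta h gamma s2 eta u ip g) ->
  is_MAP (@posterior R N M gamma s2 h eta k u t) (\col_(i < N + M) convol gb u (t i)).
Proof.
move=> D0 h0 g0 s0 ucaus [ksym kpd] HR Ht Hb Hunit Ggb Hmin.
have HI := RKHS_IPS HR.
move: (HR) => [_ [_ [_ [_ [_ [_ [_ [_ [_ [Hc Hrep]]]]]]]]]].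
pose L (i : 'I_(N + M)) g := convol g u (t i).
have Hint i g : G g -> (@lebesgue_measure R).-integrable `[0, +oo[
    (fun tau => (g tau * u (t i - tau))%:E).
  by move=> Gg; have [C HC] := Hb i; exact: (HC g Gg).1.
have Hri i : exists r, G r /\ forall g, G g -> ip g r = L i g.
  apply: (riesz HI Hc).
  - by move=> f g Gf Gg; exact: convolD (Hint i f Gf) (Hint i g Gg).
  - by move=> a f Gf; exact: convolZ (Hint i f Gf).
  - by have [C HC] := Hb i; exists C => g Gg; exact: (HC g Gg).2.
have [r Hr] := choice Hri.
have Gr i : G (r i) by case: (Hr i).
have Lr i g : G g -> ip g (r i) = L i g by case: (Hr i) => _; apply.
have Kent a b : ip (r a) (r b) = kentry k u (t b) (t a).
  rewrite Lr; last exact: Gr.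
  rewrite /L /convol /kentry; apply: eq_Rintegral => xi.
  rewrite inE /= in_itv /= andbT => xi0.
  have [Gks rep] := Hrep xi xi0.
  rewrite -(rep (r a) (Gr a)) (ipC HI (Gr a) Gks) Lr // /L /convol.
  rewrite mulrC -RintegralZl; [| exact: measurable_itv | exact: Hint a _ Gks].
  apply: eq_Rintegral => tau; rewrite inE /= in_itv /= andbT => tau0.
  rewrite /ksec tau0 (ksym tau xi tau0 xi0); ring.
pose K := \matrix_(i, j) ip (r i) (r j).
have covxE : covx gamma k u t = gamma^-1 *: K.
  rewrite /covx; congr (_ *: _); apply/matrixP => i j; rewrite !mxE.
  by rewrite (ipC HI (Gr i) (Gr j)) Kent.
have gU : gamma^-1 \is a GRing.unit by rewrite unitfE invr_eq0 gt_eqF.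
have KU : K \in unitmx by rewrite -(unitmxZ _ gU) -covxE.
have invE : invmx (covx gamma k u t) = gamma *: invmx K.
  by rewrite covxE invmxZ ?invrK // -covxE.
pose q (x : 'cV[R]_(N + M)) := (x^T *m invmx K *m x) 0 0.
have Qx x : (x^T *m invmx (covx gamma k u t) *m x) 0 0 = gamma * q x.
  by rewrite invE -scalemxAr -scalemxAl mxE.
pose gi (x : 'cV[R]_(N + M)) (i : 'I_N) := gauss_int s2 (x (lshift M i) 0) (eta i) h.
have gi0 x i : 0 < gi x i by exact: gauss_int_gt0.
pose P0 := (Num.sqrt (2 * pi * s2))^-1 ^+ N *
  ((Num.sqrt (2 * pi)) ^- (N + M) / Num.sqrt (\det (covx gamma k u t))).
have P00 : 0 <= P0.
  rewrite /P0; apply: mulr_ge0; first by rewrite exprn_ge0 // invr_ge0 sqrtr_ge0.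
  by apply: mulr_ge0; rewrite ?invr_ge0 ?exprn_ge0 ?sqrtr_ge0.
have post x : posterior gamma s2 h eta k u t x =
    P0 * expR (\sum_(i < N) ln (gi x i) + - (gamma * q x) / 2).
  rewrite /posterior /likelihood /gauss_density big_split /= prodr_const card_ord.
  rewrite expRD expR_sum Qx.
  under [X in _ = _ * (X * _)]eq_bigr do rewrite lnK ?posrE ?gi0 //.
  rewrite /P0 /gi; ring.
move=> x; rewrite !post; apply: ler_wpM2l => //; rewrite ler_expR.
set xh := \col_(i < N + M) convol gb u (t i).
have [gx [Ggx Lgx qgx _]] := gram_a HI Gr Lr KU x.
have Hcx : crit Delta h gamma s2 eta u ip gx =
    - 2 * (\sum_(i < N) ln (gi x i)) + gamma * q x.
  rewrite /crit qgx; congr (_ * _ + _); apply: eq_bigr => i _.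
  by rewrite /gi -Ht -Lgx.
have Hch : - 2 * (\sum_(i < N) ln (gi xh i)) + gamma * q xh <=
    crit Delta h gamma s2 eta u ip gb.
  rewrite /crit.
  have -> : \sum_(i < N) ln (gauss_int s2 (convol gb u (i.+1%:R * Delta)) (eta i) h) =
      \sum_(i < N) ln (gi xh i).
    by apply: eq_bigr => i _; rewrite /gi /xh mxE Ht.
  rewrite lerD2l; apply: ler_wpM2l; first exact: ltW.
  exact: (gram_b HI Gr Lr KU Ggb).
have := Hmin gx Ggx; rewrite Hcx => H.
have := le_trans Hch H.
set A := \sum_(i < N) ln (gi x i); set B := \sum_(i < N) ln (gi xh i).
set C := gamma * q x; set D := gamma * q xh.
lra.
Qed.
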